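(* Consider the generic SURQT model (6) described in the context, and let $(\mathbf{R}(t),\mathbf{T}(t))$ be any solution with initial value in $\Omega$. Then for every $i=1,\dots,N$, \[ \limsup_{t\to\infty}R_i(t)\le \frac{f_i^T(\mathbf{1})}{f_i^T(\mathbf{1})+\theta_i},\qquad \liminf_{t\to\infty}T_i(t)\ge \frac{\theta_i\delta_i}{\left[f_i^T(\mathbf{1})+\theta_i\right]\left[f_i^T(\mathbf{1})+\delta_i\right]}, \] where $\mathbf{1}=(1,\dots,1)$.
   Context: $V=\{1,\dots,N\}$; $G_R=(V,E_R)$ and $G_T=(V,E_T)$ are strongly connected directed graphs. $\theta_i>0,\delta_i>0$ for all $i$; $\mathbf{D}_\theta=\mathrm{diag}(\theta_i)$, $\mathbf{D}_\delta=\mathrm{diag}(\delta_i)$. The functions $f_i^T,g_i^R:\mathbb{R}^N\to\mathbb{R}$ ($i=1,\dots,N$) satisfy: (C1) $f_i^T(x_1,\dots,x_N)$ depends on $x_j$ iff $(i,j)\in E_R$, and $g_i^R$ depends on $x_j$ iff $(i,j)\in E_T$; (C2) $f_i^T(\mathbf 0)=g_i^R(\mathbf 0)=0$; (C3) they are twice continuously differentiable; (C4) each is strictly increasing in each of its arguments; (C5) each is concave. The generic SURQT model (6) is the system, for $t\ge0$, $i=1,\dots,N$, \[ \frac{dR_i}{dt}=T_i f_i^T(\mathbf{R})-R_i g_i^R(\mathbf{T})-\theta_iR_i,\qquad \frac{dT_i}{dt}=R_i g_i^R(\mathbf{T})-T_i f_i^T(\mathbf{R})+\delta_i(1-R_i-T_i),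 \] with $\mathbf{R}=(R_1,\dots,R_N)$, $\mathbf{T}=(T_1,\dots,T_N)$, and initial state in $\Omega=\{(x_1,\dots,x_{2N})\in\mathbb{R}_+^{2N}: x_i+x_{N+i}\le1,\ 1\le i\le N\}$ (which is positively invariant). *)

(* Defs.v *)
From Stdlib Require Import Reals Lra Relations.
Open Scope R_scope.

(* Vectors of R^N are modelled as functions nat -> R; index i in {0,...,N-1}
   stands for node i+1 of V = {1,...,N}. *)
Definition vec := nat -> R.

Definition upd (x : vec) (j : nat) (s : R) : vec :=
  fun k => if Nat.eq_dec k j then s else x k.

Definition ones : vec := fun _ => 1.

Definition depends_on (f : vec -> R) (j : nat) : Prop :=
  exists x s, f (upd x j s) <> f x.

Definition strictly_incr_in (f : vec -> R) (j : nat) : Prop :=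
  forall x s1 s2, s1 < s2 -> f (upd x j s1) < f (upd x j s2).

Definition concave (f : vec -> R) : Prop :=
  forall x y l, 0 <= l <= 1 ->
    f (fun k => l * x k + (1 - l) * y k) >= l * f x + (1 - l) * f y.

Definition partial_lim (f : vec -> R) (j : nat) (x : vec) (l : R) : Prop :=
  derivable_pt_lim (fun s => f (upd x j s)) (x j) l.

(* continuity on R^N (only the first N coordinates are the variables) *)
Definition continuous_N (N : nat) (g : vec -> R) : Prop :=
  forall x eps, eps > 0 -> exists delta, delta > 0 /\
    forall y, (forall k, (k < N)%nat -> Rabs (y k - x k) < delta) ->
      Rabs (g y - g x) < eps.

Definition C2_N (N : nat) (f : vec -> R) : Prop :=
  continuous_N N f /\
  exists (D1 : nat -> vec -> R) (D2 : nat -> nat -> vec -> R),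
    (forall j x, (j < N)%nat -> partial_lim f j x (D1 j x)) /\
    (forall j, (j < N)%nat -> continuous_N N (D1 j)) /\
    (forall j k x, (j < N)%nat -> (k < N)%nat -> partial_lim (D1 j) k x (D2 j k x)) /\
    (forall j k, (j < N)%nat -> (k < N)%nat -> continuous_N N (D2 j k)).

Definition strongly_connected (N : nat) (E : nat -> nat -> Prop) : Prop :=
  (forall i j, E i j -> (i < N)%nat /\ (j < N)%nat) /\
  (forall i j, (i < N)%nat -> (j < N)%nat -> i <> j -> clos_trans nat E i j).

Definition admissible (N : nat) (E : nat -> nat -> Prop) (F : nat -> vec -> R) : Prop :=
  forall i, (i < N)%nat ->
    (forall j, depends_on (F i) j <-> E i j) /\
    F i (fun _ => 0) = 0 /\
    C2_N N (F i) /\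
    (forall j, E i j -> strictly_incr_in (F i) j) /\
    concave (F i).

Definition right_cont_0 (x : R -> R) : Prop :=
  forall eps, eps > 0 -> exists d, d > 0 /\
    forall s, 0 <= s < d -> Rabs (x s - x 0) < eps.

Definition SURQT_solution (N : nat) (f g : nat -> vec -> R) (theta delta : nat -> R)
  (Rs Ts : R -> vec) : Prop :=
  forall i, (i < N)%nat ->
    right_cont_0 (fun t => Rs t i) /\ right_cont_0 (fun t => Ts t i) /\
    forall t, t > 0 ->
      derivable_pt_lim (fun s => Rs s i) t
        (Ts t i * f i (Rs t) - Rs t i * g i (Ts t) - theta i * Rs t i) /\
      derivable_pt_lim (fun s => Ts s i) t
        (Rs t i * g i (Ts t) - Ts t i * f i (Rs t) + delta i * (1 - Rs t i - Ts t i)).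

Definition in_Omega (N : nat) (x y : vec) : Prop :=
  forall i, (i < N)%nat -> 0 <= x i /\ 0 <= y i /\ x i + y i <= 1.

Definition limsup_le (h : R -> R) (c : R) : Prop :=
  forall eps, eps > 0 -> exists t0, forall t, t >= t0 -> h t <= c + eps.
Definition liminf_ge (h : R -> R) (c : R) : Prop :=
  forall eps, eps > 0 -> exists t0, forall t, t >= t0 -> h t >= c - eps.

(* Main.v *)
Require Import Defs.
From Stdlib Require Import Reals Lra Lia Classical.
From Coquelicot Require Import Coquelicot.
Open Scope R_scope.

Lemma cont_of_deriv f t l : derivable_pt_lim f t l -> forall e, e > 0 ->
  exists d, d > 0 /\ forall s, Rabs (s - t) < d -> Rabs (f s - f t) < e.
Proof.
  intros H e He.
  assert (C : continuity_pt f t) by (apply derivable_continuous_pt; exists l; exact H).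
  destruct (C e He) as [d [Hd Hc]].
  exists d; split; auto. intros s Hs.
  destruct (Req_dec s t) as [->|Hne].
  - rewrite Rminus_eq_0, Rabs_R0; lra.
  - apply (Hc s). split. split; [exact I| auto]. exact Hs.
Qed.

Definition rc (f : R -> R) t := forall e, e > 0 -> exists d, d > 0 /\
  forall s, t <= s < t + d -> Rabs (f s - f t) < e.

Lemma rc_of_deriv f t l : derivable_pt_lim f t l -> rc f t.
Proof.
  intros H e He. destruct (cont_of_deriv f t l H e He) as [d [Hd Hc]].
  exists d; split; auto. intros s Hs. apply Hc. rewrite Rabs_right; lra.
Qed.

Lemma rc_plus f g t : rc f t -> rc g t -> rc (fun s => f s + g s) t.
Proof.
  intros Hf Hg e He.
  destruct (Hf (e/2)) as [d1 [H1 F1]]; [lra|].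
  destruct (Hg (e/2)) as [d2 [H2 F2]]; [lra|].
  exists (Rmin d1 d2); split. apply Rmin_pos; auto.
  intros s Hs. pose proof (Rmin_l d1 d2). pose proof (Rmin_r d1 d2).
  specialize (F1 s ltac:(lra)). specialize (F2 s ltac:(lra)).
  replace (f s + g s - (f t + g t)) with ((f s - f t) + (g s - g t)) by ring.
  eapply Rle_lt_trans. apply Rabs_triang. lra.
Qed.

Lemma rc_opp f t : rc f t -> rc (fun s => - f s) t.
Proof.
  intros Hf e He. destruct (Hf e He) as [d [Hd F]]. exists d; split; auto.
  intros s Hs. replace (- f s - - f t) with (- (f s - f t)) by ring.
  rewrite Rabs_Ropp. auto.
Qed.

Lemma rc_const c t : rc (fun _ => c) t.
Proof. intros e He. exists 1; split; [lra|]. intros. rewrite Rminus_eq_0, Rabs_R0; lra. Qed.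

Lemma rc_ext f g t : (forall s, f s = g s) -> rc f t -> rc g t.
Proof. intros E H e He. destruct (H e He) as [d [Hd F]]. exists d; split; auto.
  intros s Hs. rewrite <- !E. auto. Qed.

Lemma deriv_pos_left f c l : derivable_pt_lim f c l -> l > 0 ->
  exists d, d > 0 /\ forall s, c - d < s < c -> f s < f c.
Proof.
  intros H Hl. destruct (H l Hl) as [d Hd].
  exists d; split. apply cond_pos. intros s Hs.
  assert (Hh : s - c <> 0) by lra.
  assert (Ha : Rabs (s - c) < d) by (rewrite Rabs_left; lra).
  specialize (Hd (s - c) Hh Ha). replace (c + (s - c)) with s in Hd by ring.
  apply Rabs_def2 in Hd. destruct Hd as [_ Hd].
  assert (Q : (f s - f c) / (s - c) > 0) by lra.
  assert (E : f s - f c = (f s - f c) / (s - c) * (s - c)) by (field; auto).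
  assert ((f s - f c) / (s - c) * (s - c) < 0).
  { rewrite Rmult_comm. apply Rmult_neg_pos; lra. }
  lra.
Qed.

Lemma combine (M : nat) (P : nat -> R -> Prop) :
  (forall j d d', 0 < d' <= d -> P j d -> P j d') ->
  (forall j, (j < M)%nat -> exists d, d > 0 /\ P j d) ->
  exists d, d > 0 /\ forall j, (j < M)%nat -> P j d.
Proof.
  intros Hm. induction M as [|M IH]; intros H.
  - exists 1; split; [lra|]. intros j Hj; lia.
  - destruct IH as [d1 [H1 F1]]. { intros j Hj; apply H; lia. }
    destruct (H M ltac:(lia)) as [d2 [H2 F2]].
    exists (Rmin d1 d2); split. apply Rmin_pos; auto.
    intros j Hj. pose proof (Rmin_l d1 d2). pose proof (Rmin_r d1 d2).
    assert (Rmin d1 d2 > 0) by (apply Rmin_pos; auto).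
    destruct (Nat.eq_dec j M) as [->|Hne].
    + apply (Hm M d2); auto; lra.
    + apply (Hm j d1); [lra|]. apply F1; lia.
Qed.

Lemma barrier (M : nat) (T0 : R) (phi phi' : nat -> R -> R) :
  (forall j, (j < M)%nat -> phi j 0 > 0) ->
  (forall j, (j < M)%nat -> forall t, 0 <= t -> rc (phi j) t) ->
  (forall j, (j < M)%nat -> forall t, 0 < t -> derivable_pt_lim (phi j) t (phi' j t)) ->
  (forall t, 0 < t <= T0 -> (forall j, (j < M)%nat -> phi j t >= 0) ->
     forall j, (j < M)%nat -> phi j t = 0 -> phi' j t > 0) ->
  forall t, 0 <= t <= T0 -> forall j, (j < M)%nat -> phi j t > 0.
Proof.
  intros H0 Hrc Hd Hb.
  set (Good := fun t => forall j, (j < M)%nat -> phi j t > 0).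
  assert (Main : forall t1, 0 <= t1 <= T0 -> Good t1).
  2: { intros t Ht j Hj. apply (Main t Ht j Hj). }
  intros t1 Ht1. apply NNPP; intro Hbad.
  set (A := fun s => 0 <= s <= t1 /\ forall u, 0 <= u <= s -> Good u).
  assert (HA0 : A 0). { split; [lra|]. intros u Hu. replace u with 0 by lra. exact H0. }
  assert (Hbd : bound A). { exists t1. intros s [Hs _]. lra. }
  destruct (completeness A Hbd (ex_intro _ 0 HA0)) as [c [Hub Hlub]].
  assert (Hc0 : 0 <= c) by (apply Hub; exact HA0).
  assert (Hc1 : c <= t1). { apply Hlub. intros s [Hs _]. lra. }
  assert (F2 : forall u, 0 <= u < c -> Good u).
  { intros u Hu. apply NNPP; intro Hn.
    assert (c <= u). { apply Hlub. intros s [Hs Hg]. destruct (Rle_lt_dec s u) as [|Hlt]; auto.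
      exfalso. apply Hn, Hg. lra. }
    lra. }
  assert (F3 : Good c -> exists d, d > 0 /\ forall s, c <= s < c + d -> Good s).
  { intros Hg.
    destruct (combine M (fun j d => forall s, c <= s < c + d -> phi j s > 0)) as [d [Hd' Fd]].
    - intros j d d' Hdd P s Hs. apply P; lra.
    - intros j Hj. destruct (Hrc j Hj c Hc0 (phi j c) (Hg j Hj)) as [d [Hdp F]].
      exists d; split; auto. intros s Hs. specialize (F s Hs). apply Rabs_def2 in F. lra.
    - exists d; split; auto. intros s Hs j Hj. apply Fd; auto. }
  assert (F4 : ~ Good c).
  { intros Hg. destruct (F3 Hg) as [d [Hdp Fd]].
    destruct (Rlt_le_dec c t1) as [Hlt|Hge].
    - set (s := Rmin (c + d/2) t1).
      assert (Hs1 : s <= c + d/2) by apply Rmin_l.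
      assert (Hs2 : s <= t1) by apply Rmin_r.
      assert (Hs3 : c < s) by (apply Rmin_glb_lt; lra).
      assert (As : A s).
      { split. lra.
        intros u Hu. destruct (Rlt_le_dec u c). apply F2; lra. apply Fd. lra. }
      pose proof (Hub s As). lra.
    - apply Hbad. replace t1 with c by lra. exact Hg. }
  assert (F5 : 0 < c).
  { destruct Hc0 as [|E]; auto. exfalso. apply F4. rewrite <- E. exact H0. }
  assert (F6 : forall j, (j < M)%nat -> phi j c >= 0).
  { intros j Hj. apply Rnot_lt_ge. intro Hneg.
    destruct (cont_of_deriv (phi j) c (phi' j c) (Hd j Hj c F5) (- phi j c)) as [d [Hdp F]]; [lra|].
    set (s := Rmax (c - d/2) (c/2)).
    assert (Hs1 : c/2 <= s) by apply Rmax_r.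
    assert (Hs2 : s < c) by (apply Rmax_lub_lt; lra).
    assert (Hs3 : c - d/2 <= s) by apply Rmax_l.
    assert (Hab : Rabs (s - c) < d) by (rewrite Rabs_left; lra).
    specialize (F s Hab). apply Rabs_def2 in F.
    assert (phi j s > 0) by (apply (F2 s ltac:(lra) j Hj)). lra. }
  destruct (not_all_ex_not _ _ F4) as [j Hj].
  assert (Hjm : (j < M)%nat /\ phi j c <= 0).
  { apply NNPP; intro Hn. apply Hj. intro Hjm. apply Rnot_le_gt. intro. apply Hn; auto. }
  destruct Hjm as [Hjm Hle].
  pose proof (F6 j Hjm).
  assert (Heq : phi j c = 0) by lra.
  assert (Hpos : phi' j c > 0) by (apply Hb; auto; lra).
  destruct (deriv_pos_left (phi j) c _ (Hd j Hjm c F5) Hpos) as [d [Hdp F]].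
  set (s := Rmax (c - d/2) (c/2)).
  assert (Hs1 : c/2 <= s) by apply Rmax_r.
  assert (Hs2 : s < c) by (apply Rmax_lub_lt; lra).
  assert (Hs3 : c - d/2 <= s) by apply Rmax_l.
  specialize (F s ltac:(lra)).
  assert (phi j s > 0) by (apply (F2 s ltac:(lra) j Hjm)). lra.
Qed.

Lemma barrier3 (N : nat) (T0 : R) (p q r p' q' r' : nat -> R -> R) :
  (forall k, (k < N)%nat -> p k 0 > 0 /\ q k 0 > 0 /\ r k 0 > 0) ->
  (forall k, (k < N)%nat -> forall t, 0 <= t -> rc (p k) t /\ rc (q k) t /\ rc (r k) t) ->
  (forall k, (k < N)%nat -> forall t, 0 < t -> derivable_pt_lim (p k) t (p' k t) /\
      derivable_pt_lim (q k) t (q' k t) /\ derivable_pt_lim (r k) t (r' k t)) ->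
  (forall t, 0 < t <= T0 -> (forall k, (k < N)%nat -> p k t >= 0 /\ q k t >= 0 /\ r k t >= 0) ->
     forall k, (k < N)%nat -> (p k t = 0 -> p' k t > 0) /\ (q k t = 0 -> q' k t > 0) /\
        (r k t = 0 -> r' k t > 0)) ->
  forall t, 0 <= t <= T0 -> forall k, (k < N)%nat -> p k t > 0 /\ q k t > 0 /\ r k t > 0.
Proof.
  intros H0 Hrc Hd Hb.
  pose proof (barrier (3*N) T0
    (fun j s => if j <? N then p j s else if j <? 2*N then q (j-N)%nat s else r (j-2*N)%nat s)
    (fun j s => if j <? N then p' j s else if j <? 2*N then q' (j-N)%nat s else r' (j-2*N)%nat s))
    as B.
  assert (Ext : forall (P : R -> Prop) (s : R),
     (forall k, (k < N)%nat -> P (p k s) /\ P (q k s) /\ P (r k s)) ->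
     forall j, (j < 3*N)%nat ->
     P (if j <? N then p j s else if j <? 2*N then q (j-N)%nat s else r (j-2*N)%nat s)).
  { intros P s H j Hj. destruct (Nat.ltb_spec j N). apply H; auto.
    destruct (Nat.ltb_spec j (2*N)). apply (H (j-N)%nat); lia. apply (H (j-2*N)%nat); lia. }
  assert (Back : forall (P : R -> Prop) (s : R),
     (forall j, (j < 3*N)%nat ->
       P (if j <? N then p j s else if j <? 2*N then q (j-N)%nat s else r (j-2*N)%nat s)) ->
     forall k, (k < N)%nat -> P (p k s) /\ P (q k s) /\ P (r k s)).
  { intros P s H k Hk. split; [|split].
    - specialize (H k ltac:(lia)). destruct (Nat.ltb_spec k N); [auto|lia].
    - specialize (H (N+k)%nat ltac:(lia)). destruct (Nat.ltb_spec (N+k) N); [lia|].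
      destruct (Nat.ltb_spec (N+k) (2*N)); [|lia]. replace (N+k-N)%nat with k in H by lia. auto.
    - specialize (H (2*N+k)%nat ltac:(lia)). destruct (Nat.ltb_spec (2*N+k) N); [lia|].
      destruct (Nat.ltb_spec (2*N+k) (2*N)); [lia|]. replace (2*N+k-2*N)%nat with k in H by lia. auto. }
  intros t Ht. apply (Back (fun x => x > 0) t). intros j Hj. apply B; auto.
  - intros j' Hj'. apply (Ext (fun x => x > 0) 0); auto.
  - intros j' Hj' s Hs. destruct (Nat.ltb_spec j' N). apply Hrc; auto.
    destruct (Nat.ltb_spec j' (2*N)). apply (Hrc (j'-N)%nat); auto; lia. apply (Hrc (j'-2*N)%nat); auto; lia.
  - intros j' Hj' s Hs. destruct (Nat.ltb_spec j' N). apply Hd; auto.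
    destruct (Nat.ltb_spec j' (2*N)). apply (Hd (j'-N)%nat); auto; lia. apply (Hd (j'-2*N)%nat); auto; lia.
  - intros s Hs Hge j' Hj'. 
    pose proof (Back (fun x => x >= 0) s Hge) as Hge'.
    specialize (Hb s Hs Hge').
    destruct (Nat.ltb_spec j' N). apply Hb; auto.
    destruct (Nat.ltb_spec j' (2*N)). apply (Hb (j'-N)%nat); auto; lia. apply (Hb (j'-2*N)%nat); auto; lia.
Qed.

Lemma dexpa (a t0 s : R) : derivable_pt_lim (fun u => exp (a*(u - t0))) s (a * exp (a*(s-t0))).
Proof. apply is_derive_Reals. auto_derive; auto. unfold Rminus; ring. Qed.

Lemma cmp_up (y y' : R -> R) a b t0 : a > 0 -> t0 > 0 ->
  (forall t, t >= t0 -> derivable_pt_lim y t (y' t)) ->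
  (forall t, t >= t0 -> y' t <= b - a * y t) ->
  forall t, t >= t0 -> y t <= b/a + (y t0 - b/a) * exp (-(a*(t-t0))).
Proof.
  intros Ha Ht0 Hd Hb t Ht.
  set (z := fun s => (y s - b/a) * exp (a*(s - t0))).
  set (z' := fun s => (y' s + a * (y s - b/a)) * exp (a*(s-t0))).
  assert (Hz : forall s, s >= t0 -> derivable_pt_lim z s (z' s)).
  { intros s Hs.
    assert (H1 : derivable_pt_lim (fun u => y u - b/a) s (y' s - 0)).
    { apply (derivable_pt_lim_minus y (fun _ => b/a)). apply Hd; auto. apply derivable_pt_lim_const. }
    pose proof (derivable_pt_lim_mult _ _ s _ _ H1 (dexpa a t0 s)) as H2.
    eapply derivable_pt_lim_ext in H2.
    2: { intro u. reflexivity. }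
    unfold z, z'. replace ((y' s + a * (y s - b / a)) * exp (a * (s - t0))) with
      ((y' s - 0) * exp (a * (s - t0)) + (y s - b / a) * (a * exp (a * (s - t0)))) by ring.
    exact H2. }
  assert (Hzt : z t <= z t0).
  { destruct Ht as [Hgt|Heq].
    - destruct (MVT_cor2 z z' t0 t Hgt) as [c [Hc1 Hc2]].
      { intros c Hc. apply Hz. lra. }
      assert (z' c <= 0).
      { unfold z'. assert (exp (a*(c-t0)) > 0) by apply exp_pos.
        specialize (Hb c ltac:(lra)). 
        assert (y' c + a * (y c - b/a) <= 0).
        { replace (y' c + a * (y c - b / a)) with (y' c - (b - a * y c)) by (field; lra). lra. }
        nra. }
      assert (z' c * (t - t0) <= 0) by nra. lra.
    - rewrite Heq. lra. }
  unfold z in Hzt. replace (t0 - t0) with 0 in Hzt by ring. rewrite Rmult_0_r, exp_0, Rmult_1_r in Hzt.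
  rewrite exp_Ropp. set (E := exp (a*(t-t0))) in *.
  assert (HE : E > 0) by apply exp_pos.
  assert (y t - b/a <= (y t0 - b/a) * / E).
  { apply (Rmult_le_reg_r E); auto. rewrite Rmult_assoc, Rinv_l, Rmult_1_r; lra. }
  lra.
Qed.

Lemma cmp_low (y y' : R -> R) a b t0 : a > 0 -> t0 > 0 ->
  (forall t, t >= t0 -> derivable_pt_lim y t (y' t)) ->
  (forall t, t >= t0 -> y' t >= b - a * y t) ->
  forall t, t >= t0 -> y t >= b/a + (y t0 - b/a) * exp (-(a*(t-t0))).
Proof.
  intros Ha Ht0 Hd Hb t Ht.
  pose proof (cmp_up (fun s => - y s) (fun s => - y' s) a (-b) t0 Ha Ht0) as H.
  simpl in H. assert (HH : - y t <= - b / a + (- y t0 - - b / a) * exp (- (a * (t - t0)))).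
  { apply H; auto.
    - intros s Hs. apply (derivable_pt_lim_opp y). auto.
    - intros s Hs. specialize (Hb s Hs). lra. }
  replace (- b / a) with (- (b/a)) in HH by (field; lra).
  replace (- y t0 - - (b / a)) with (- (y t0 - b/a)) in HH by ring.
  lra.
Qed.

Lemma exp_tail (D a t0 eps : R) : a > 0 -> eps > 0 ->
  exists t1, forall t, t >= t1 -> Rabs D * exp (-(a*(t-t0))) <= eps.
Proof.
  intros Ha He. exists (t0 + Rabs D / eps / a). intros t Ht.
  set (x := a*(t-t0)).
  assert (Hx : x >= Rabs D / eps).
  { unfold x. assert (t - t0 >= Rabs D / eps / a) by lra.
    assert (a * (t - t0) >= a * (Rabs D / eps / a)) by (apply Rmult_ge_compat_l; lra).
    replace (a * (Rabs D / eps / a)) with (Rabs D / eps) in H0 by (field; lra). lra. }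
  pose proof (Rabs_pos D) as HD.
  assert (HDe : Rabs D / eps >= 0) by (apply Rle_ge, Rdiv_le_0_compat; lra).
  assert (E1 : 1 + x <= exp x) by apply exp_ineq1_le.
  rewrite exp_Ropp.
  assert (exp x > 0) by apply exp_pos.
  assert (Rabs D <= eps * exp x).
  { assert (Rabs D = eps * (Rabs D / eps)) by (field; lra). nra. }
  apply (Rmult_le_reg_r (exp x)); auto.
  rewrite Rmult_assoc, Rinv_l, Rmult_1_r; lra.
Qed.

Lemma agree N f : continuous_N N f -> forall x y, (forall k, (k < N)%nat -> x k = y k) -> f x = f y.
Proof.
  intros C x y E. apply NNPP; intro Hne.
  assert (Hp : Rabs (f y - f x) > 0) by (apply Rabs_pos_lt; intro; apply Hne; lra).
  destruct (C x _ Hp) as [d [Hd F]].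
  assert (Rabs (f y - f x) < Rabs (f y - f x)).
  { apply F. intros k Hk. rewrite (E k Hk), Rminus_eq_0, Rabs_R0; lra. }
  lra.
Qed.

Lemma mono N f : continuous_N N f -> (forall j, depends_on f j -> strictly_incr_in f j) ->
  forall x y, (forall k, (k < N)%nat -> x k <= y k) -> f x <= f y.
Proof.
  intros C Hs x y Hxy.
  set (z := fun m : nat => fun k => if Nat.ltb k m then y k else x k).
  assert (Hz : forall m, (m <= N)%nat -> f x <= f (z m)).
  { induction m as [|m IH]; intros Hm.
    - right. apply (agree N f C). intros k Hk. unfold z.
      destruct (Nat.ltb_spec k 0); [lia|auto].
    - eapply Rle_trans. apply IH; lia.
      assert (E1 : f (z m) = f (upd (z m) m (x m))).
      { apply (agree N f C). intros k Hk. unfold upd, z. destruct (Nat.eq_dec k m) as [->|]; auto.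
        destruct (Nat.ltb_spec m m); [lia|auto]. }
      assert (E2 : f (z (S m)) = f (upd (z m) m (y m))).
      { apply (agree N f C). intros k Hk. unfold upd, z. destruct (Nat.eq_dec k m) as [->|Hne].
        - destruct (Nat.ltb_spec m (S m)); [auto|lia].
        - destruct (Nat.ltb_spec k (S m)), (Nat.ltb_spec k m); auto; lia. }
      rewrite E1, E2.
      destruct (classic (depends_on f m)) as [Hd|Hnd].
      + destruct (Hxy m ltac:(lia)) as [Hlt|Heq].
        * left. apply Hs; auto.
        * rewrite Heq. right; reflexivity.
      + assert (Hc : forall s, f (upd (z m) m s) = f (z m)).
        { intro s. apply NNPP. intro Hn. apply Hnd. exists (z m), s. auto. }
        rewrite !Hc. right; reflexivity. }
  eapply Rle_trans. apply (Hz N); lia. right. apply (agree N f C). intros k Hk. unfold z.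
  destruct (Nat.ltb_spec k N); auto; lia.
Qed.

Record good_fun (N : nat) (f : vec -> R) : Prop := {
  gf_cont : continuous_N N f;
  gf_inc : forall j, depends_on f j -> strictly_incr_in f j;
  gf_0 : f (fun _ => 0) = 0;
  gf_conc : concave f }.

Lemma adm_good N E F i : admissible N E F -> (i < N)%nat -> good_fun N (F i).
Proof.
  intros H Hi. destruct (H i Hi) as [H1 [H2 [[H3 _] [H4 H5]]]].
  constructor; auto. intros j Hd. apply H4. apply H1; auto.
Qed.

Lemma gf_mono N f : good_fun N f -> forall x y, (forall k, (k < N)%nat -> x k <= y k) -> f x <= f y.
Proof. intros [C I _ _]. apply mono; auto. Qed.

Lemma gf_nonneg N f : good_fun N f -> forall x, (forall k, (k < N)%nat -> 0 <= x k) -> 0 <= f x.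
Proof. intros G x Hx. rewrite <- (gf_0 N f G). apply (gf_mono N f G). auto. Qed.

Lemma gf_m1 N f : good_fun N f -> f (fun _ => -1) <= 0.
Proof. intros G. rewrite <- (gf_0 N f G). apply (gf_mono N f G). intros; lra. Qed.

Lemma gf_low N f : good_fun N f -> forall m x, 0 <= m <= 1 ->
  (forall k, (k < N)%nat -> - m <= x k) -> m * f (fun _ => -1) <= f x.
Proof.
  intros G m x Hm Hx.
  pose proof (gf_conc N f G (fun _ => -1) (fun _ => 0) m Hm) as Hc.
  rewrite (gf_0 N f G) in Hc.
  assert (f (fun k => m * -1 + (1 - m) * 0) <= f x).
  { apply (gf_mono N f G). intros k Hk. specialize (Hx k Hk). lra. }
  simpl in Hc. lra.
Qed.

Fixpoint sumN (c : nat -> R) (n : nat) : R := match n with O => 0 | S n => sumN c n + c n end.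

Lemma sumN_nonneg c : (forall k, 0 <= c k) -> forall n, 0 <= sumN c n.
Proof. intros Hc n; induction n; simpl. lra. pose proof (Hc n); lra. Qed.

Lemma sumN_ge c : (forall k, 0 <= c k) -> forall n k, (k < n)%nat -> c k <= sumN c n.
Proof.
  intros Hc n. induction n; intros k Hk; simpl. lia.
  destruct (Nat.eq_dec k n) as [->|Hne].
  - pose proof (sumN_nonneg c Hc n); lra.
  - pose proof (IHn k ltac:(lia)). pose proof (Hc n); lra.
Qed.

Lemma dh (e K t : R) : derivable_pt_lim (fun s => e * exp (K*s)) t (K * (e * exp (K*t))).
Proof. apply is_derive_Reals. auto_derive; auto. ring. Qed.

Lemma rc0 x : right_cont_0 x -> rc x 0.
Proof. intros H e He. destruct (H e He) as [d [Hd F]]. exists d; split; auto.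
  intros s Hs. apply F. lra. Qed.

Lemma exp_le1 x : x <= 0 -> exp x <= 1.
Proof. intros [H|H]. left. rewrite <- exp_0. apply exp_increasing; auto. subst; rewrite exp_0; lra. Qed.

Lemma strict N theta delta fT gR Rs Ts :
  (forall i, (i < N)%nat -> theta i > 0 /\ delta i > 0) ->
  (forall i, (i < N)%nat -> good_fun N (fT i)) ->
  (forall i, (i < N)%nat -> good_fun N (gR i)) ->
  SURQT_solution N fT gR theta delta Rs Ts ->
  in_Omega N (Rs 0) (Ts 0) ->
  forall t e0, 0 <= t -> 0 < e0 <= 1 -> forall k, (k < N)%nat ->
    Rs t k + e0 > 0 /\ Ts t k + e0 > 0 /\ 1 + e0 - Rs t k - Ts t k > 0.
Proof.
  intros Hpar Gf Gg Sol Om t e0 Ht He0.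
  set (m1 := fun _ : nat => -1). set (v3 := fun _ : nat => 3).
  set (cst := fun k => Rabs (fT k m1) + Rabs (fT k v3) + Rabs (gR k m1) + Rabs (gR k v3)
     + Rabs (theta k) + Rabs (delta k)).
  assert (Hcst0 : forall k, 0 <= cst k).
  { intro k; unfold cst.
    pose proof (Rabs_pos (fT k m1)); pose proof (Rabs_pos (fT k v3)); pose proof (Rabs_pos (gR k m1));
    pose proof (Rabs_pos (gR k v3)); pose proof (Rabs_pos (theta k)); pose proof (Rabs_pos (delta k)); lra. }
  set (K := 1 + 6 * sumN cst N).
  assert (HK : forall k, (k < N)%nat -> 6 * cst k + 1 <= K).
  { intros k Hk. pose proof (sumN_ge cst Hcst0 N k Hk). unfold K; lra. }
  assert (HK1 : 1 <= K). { pose proof (sumN_nonneg cst Hcst0 N). unfold K; lra. }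
  set (eps := e0 * exp (-(K*t))).
  set (h := fun s => eps * exp (K*s)).
  assert (Hht : h t = e0).
  { unfold h, eps. rewrite Rmult_assoc, <- exp_plus. replace (- (K*t) + K*t) with 0 by ring.
    rewrite exp_0; ring. }
  assert (Hhpos : forall s, h s > 0).
  { intro s. unfold h, eps. pose proof (exp_pos (-(K*t))). pose proof (exp_pos (K*s)).
    apply Rmult_lt_0_compat; auto. apply Rmult_lt_0_compat; lra. }
  assert (Hhle : forall s, s <= t -> h s <= e0).
  { intros s Hs. unfold h, eps. rewrite Rmult_assoc, <- exp_plus.
    assert (exp (- (K * t) + K * s) <= 1) by (apply exp_le1; nra). nra. }
  set (dR := fun k s => Ts s k * fT k (Rs s) - Rs s k * gR k (Ts s) - theta k * Rs s k).
  set (dT := fun k s => Rs s k * gR k (Ts s) - Ts s k * fT k (Rs s) + delta k * (1 - Rs s k - Ts s k)).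
  pose proof (barrier3 N t (fun k s => Rs s k + h s) (fun k s => Ts s k + h s)
     (fun k s => 1 + h s - Rs s k - Ts s k)
     (fun k s => dR k s + K * h s) (fun k s => dT k s + K * h s)
     (fun k s => K * h s - dR k s - dT k s)) as B.
  assert (G : forall k, (k < N)%nat ->
     Rs t k + h t > 0 /\ Ts t k + h t > 0 /\ 1 + h t - Rs t k - Ts t k > 0).
  2: { rewrite Hht in G. exact G. }
  intros k0 Hk0. apply (B); [ | | | | lra | auto ].
  -
    intros k Hk. destruct (Om k Hk) as [a [b c]]. pose proof (Hhpos 0). lra.
  -
    intros k Hk s Hs. destruct (Sol k Hk) as [RC1 [RC2 DD]].
    assert (rR : rc (fun u => Rs u k) s).
    { destruct Hs as [Hs|Hs]. destruct (DD s Hs) as [D1 _]. eapply rc_of_deriv; eauto.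
      subst s. apply rc0; auto. }
    assert (rT : rc (fun u => Ts u k) s).
    { destruct Hs as [Hs|Hs]. destruct (DD s Hs) as [_ D1]. eapply rc_of_deriv; eauto.
      subst s. apply rc0; auto. }
    assert (rH : rc h s) by (eapply rc_of_deriv; apply dh).
    split; [|split].
    + apply (rc_plus (fun u => Rs u k) h); auto.
    + apply (rc_plus (fun u => Ts u k) h); auto.
    + apply (rc_ext (fun u => ((1 + h u) + - Rs u k) + - Ts u k)). intro; ring.
      apply (rc_plus (fun u => (1 + h u) + - Rs u k) (fun u => - Ts u k)).
      apply (rc_plus (fun u => 1 + h u) (fun u => - Rs u k)).
      apply (rc_plus (fun _ => 1) h); auto. apply rc_const.
      apply (rc_opp (fun u => Rs u k)); auto. apply (rc_opp (fun u => Ts u k)); auto.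
  -
    intros k Hk s Hs. destruct (Sol k Hk) as [_ [_ DD]]. destruct (DD s Hs) as [DR DT].
    pose proof (dh eps K s) as DH.
    split; [|split].
    + exact (derivable_pt_lim_plus (fun u => Rs u k) h s _ _ DR DH).
    + exact (derivable_pt_lim_plus (fun u => Ts u k) h s _ _ DT DH).
    + pose proof (derivable_pt_lim_plus (fun _ => 1) h s 0 _ (derivable_pt_lim_const 1 s) DH) as D1.
      pose proof (derivable_pt_lim_minus _ _ s _ _ D1 DR) as D2.
      pose proof (derivable_pt_lim_minus _ _ s _ _ D2 DT) as D3.
      match type of D3 with derivable_pt_lim _ _ ?l =>
        replace (K * h s - dR k s - dT k s) with l by (unfold h, dR, dT; ring) end.
      exact D3.
  -
    intros s Hs Hge k Hk.
    set (m := h s).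
    assert (Hm0 : 0 < m) by apply Hhpos.
    assert (Hm1 : m <= 1) by (pose proof (Hhle s ltac:(lra)); unfold m; lra).
    assert (BR : forall l, (l < N)%nat -> - m <= Rs s l <= 3).
    { intros l Hl. destruct (Hge l Hl) as [a [b c]]. fold m in a, b, c. lra. }
    assert (BT : forall l, (l < N)%nat -> - m <= Ts s l <= 3).
    { intros l Hl. destruct (Hge l Hl) as [a [b c]]. fold m in a, b, c. lra. }
    destruct (Hge k Hk) as [Ha [Hb Hc]]. fold m in Ha, Hb, Hc.
    pose proof (Gf k Hk) as GF. pose proof (Gg k Hk) as GG.
    assert (fL : m * fT k m1 <= fT k (Rs s)).
    { apply (gf_low N); auto; [lra|]. intros l Hl. apply BR; auto. }
    assert (gL : m * gR k m1 <= gR k (Ts s)).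
    { apply (gf_low N); auto; [lra|]. intros l Hl. apply BT; auto. }
    assert (fU : fT k (Rs s) <= fT k v3).
    { apply (gf_mono N); auto. intros l Hl. unfold v3. apply BR; auto. }
    assert (gU : gR k (Ts s) <= gR k v3).
    { apply (gf_mono N); auto. intros l Hl. unfold v3. apply BT; auto. }
    assert (fm : fT k m1 <= 0) by (apply (gf_m1 N); auto).
    assert (gm : gR k m1 <= 0) by (apply (gf_m1 N); auto).
    assert (fv : 0 <= fT k v3) by (apply (gf_nonneg N); auto; intros; unfold v3; lra).
    assert (gv : 0 <= gR k v3) by (apply (gf_nonneg N); auto; intros; unfold v3; lra).
    destruct (Hpar k Hk) as [Hth Hde].
    assert (Hcst : - fT k m1 + fT k v3 - gR k m1 + gR k v3 + theta k + delta k <= cst k).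
    { unfold cst. rewrite (Rabs_left1 (fT k m1)), (Rabs_left1 (gR k m1)), (Rabs_right (fT k v3)),
        (Rabs_right (gR k v3)), (Rabs_right (theta k)), (Rabs_right (delta k)); lra. }
    pose proof (HK k Hk) as HKk.
    set (a := Rs s k) in *. set (b := Ts s k) in *.
    set (F := fT k (Rs s)) in *. set (G := gR k (Ts s)) in *.
    set (Cf := - fT k m1) in *. set (Cg := - gR k m1) in *.
    set (Uf := fT k v3) in *. set (Ug := gR k v3) in *.
    assert (Cf >= 0) by (unfold Cf; lra). assert (Cg >= 0) by (unfold Cg; lra).
    assert (fL' : F >= - m * Cf) by (unfold Cf; lra).
    assert (gL' : G >= - m * Cg) by (unfold Cg; lra).
    split; [|split]; intro Heq; unfold dR, dT; fold a b F G; cbv beta; fold m.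
    + assert (Ea : a = - m) by lra. rewrite Ea.
      assert (P1 : (b + m) * (F + m * Cf) >= 0) by (apply Rle_ge, Rmult_le_pos; lra).
      assert (P2 : (3 - b) * (m * Cf) >= 0) by (apply Rle_ge, Rmult_le_pos; nra).
      assert (P3 : m * (Uf - F) >= 0) by (apply Rle_ge, Rmult_le_pos; lra).
      assert (P4 : m * Cf * (1 - m) >= 0) by (apply Rle_ge, Rmult_le_pos; nra).
      assert (P5 : m * (G + m * Cg) >= 0) by (apply Rle_ge, Rmult_le_pos; lra).
      assert (P6 : m * Cg * (1 - m) >= 0) by (apply Rle_ge, Rmult_le_pos; nra).
      assert (P7 : m * (K - 6 * cst k - 1) >= 0) by (apply Rle_ge, Rmult_le_pos; lra).
      assert (P8 : m * (cst k - (Cf + Uf + Cg + Ug + theta k + delta k)) >= 0)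
        by (apply Rle_ge, Rmult_le_pos; unfold Cg in *; lra).
      assert (P9 : m * theta k >= 0) by (apply Rle_ge, Rmult_le_pos; lra).
      assert (P10 : m * Ug >= 0) by (apply Rle_ge, Rmult_le_pos; lra).
      assert (P11 : m * delta k >= 0) by (apply Rle_ge, Rmult_le_pos; lra).
      nra.
    + assert (Eb : b = - m) by lra. rewrite Eb.
      assert (P1 : (a + m) * (G + m * Cg) >= 0) by (apply Rle_ge, Rmult_le_pos; lra).
      assert (P2 : (3 - a) * (m * Cg) >= 0) by (apply Rle_ge, Rmult_le_pos; nra).
      assert (P3 : m * (Ug - G) >= 0) by (apply Rle_ge, Rmult_le_pos; lra).
      assert (P4 : m * Cg * (1 - m) >= 0) by (apply Rle_ge, Rmult_le_pos; nra).
      assert (P5 : m * (F + m * Cf) >= 0) by (apply Rle_ge, Rmult_le_pos; lra).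
      assert (P6 : m * Cf * (1 - m) >= 0) by (apply Rle_ge, Rmult_le_pos; nra).
      assert (P7 : m * (K - 6 * cst k - 1) >= 0) by (apply Rle_ge, Rmult_le_pos; lra).
      assert (P8 : m * (cst k - (Cf + Uf + Cg + Ug + theta k + delta k)) >= 0)
        by (apply Rle_ge, Rmult_le_pos; unfold Cg in *; lra).
      assert (P9 : delta k * (1 - a + m + m) >= 0) by (apply Rle_ge, Rmult_le_pos; lra).
      assert (P10 : m * Uf >= 0) by (apply Rle_ge, Rmult_le_pos; lra).
      assert (P11 : m * theta k >= 0) by (apply Rle_ge, Rmult_le_pos; lra).
      nra.
    + assert (Eab : 1 - a - b = - m) by lra.
      assert (P1 : theta k * (a + m) >= 0) by (apply Rle_ge, Rmult_le_pos; lra).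
      assert (P7 : m * (K - 6 * cst k - 1) >= 0) by (apply Rle_ge, Rmult_le_pos; lra).
      assert (P8 : m * (cst k - (Cf + Uf + Cg + Ug + theta k + delta k)) >= 0)
        by (apply Rle_ge, Rmult_le_pos; unfold Cg in *; lra).
      assert (P2 : m * (Cf + Uf + Cg + Ug + delta k) >= 0) by (apply Rle_ge, Rmult_le_pos; lra).
      assert (E2 : K * m - (b * F - a * G - theta k * a) - (a * G - b * F + delta k * (1 - a - b))
               = K * m + theta k * a - delta k * (1 - a - b)) by ring.
      rewrite E2, Eab. nra.
Qed.

Lemma invariance N theta delta fT gR Rs Ts :
  (forall i, (i < N)%nat -> theta i > 0 /\ delta i > 0) ->
  (forall i, (i < N)%nat -> good_fun N (fT i)) ->
  (forall i, (i < N)%nat -> good_fun N (gR i)) ->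
  SURQT_solution N fT gR theta delta Rs Ts ->
  in_Omega N (Rs 0) (Ts 0) ->
  forall t, 0 <= t -> in_Omega N (Rs t) (Ts t).
Proof.
  intros Hp Gf Gg Sol Om t Ht k Hk.
  pose proof (strict N theta delta fT gR Rs Ts Hp Gf Gg Sol Om t) as S.
  split; [|split]; apply Rnot_lt_le; intro Hn.
  - destruct (S (Rmin 1 (- Rs t k)) Ht ltac:(split; [apply Rmin_pos; lra|apply Rmin_l]) k Hk) as [X _].
    pose proof (Rmin_r 1 (- Rs t k)). lra.
  - destruct (S (Rmin 1 (- Ts t k)) Ht ltac:(split; [apply Rmin_pos; lra|apply Rmin_l]) k Hk) as [_ [X _]].
    pose proof (Rmin_r 1 (- Ts t k)). lra.
  - destruct (S (Rmin 1 (Rs t k + Ts t k - 1)) Ht ltac:(split; [apply Rmin_pos; lra|apply Rmin_l]) k Hk) as [_ [_ X]].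
    pose proof (Rmin_r 1 (Rs t k + Ts t k - 1)). lra.
Qed.

Lemma limsup_from (y : R -> R) c D a t0 : a > 0 ->
  (forall t, t >= t0 -> y t <= c + D * exp (-(a*(t-t0)))) -> limsup_le y c.
Proof.
  intros Ha H eps He. destruct (exp_tail D a t0 eps Ha He) as [t1 T1].
  exists (Rmax t1 t0). intros t Ht.
  pose proof (Rmax_l t1 t0). pose proof (Rmax_r t1 t0).
  specialize (H t ltac:(lra)). specialize (T1 t ltac:(lra)).
  pose proof (exp_pos (-(a*(t-t0)))). pose proof (Rle_abs D).
  assert (D * exp (-(a*(t-t0))) <= Rabs D * exp (-(a*(t-t0)))) by (apply Rmult_le_compat_r; lra).
  lra.
Qed.

Lemma liminf_from (y : R -> R) c D a t0 : a > 0 ->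
  (forall t, t >= t0 -> y t >= c + D * exp (-(a*(t-t0)))) -> liminf_ge y c.
Proof.
  intros Ha H eps He. destruct (exp_tail D a t0 eps Ha He) as [t1 T1].
  exists (Rmax t1 t0). intros t Ht.
  pose proof (Rmax_l t1 t0). pose proof (Rmax_r t1 t0).
  specialize (H t ltac:(lra)). specialize (T1 t ltac:(lra)).
  pose proof (exp_pos (-(a*(t-t0)))). pose proof (Rle_abs (- D)). rewrite Rabs_Ropp in H3.
  assert (- D * exp (-(a*(t-t0))) <= Rabs D * exp (-(a*(t-t0)))) by (apply Rmult_le_compat_r; lra).
  lra.
Qed.

Theorem theorem1 (N : nat) (ER ET : nat -> nat -> Prop)
  (theta delta : nat -> R) (fT gR : nat -> vec -> R) (Rs Ts : R -> vec) :
  strongly_connected N ER ->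
  strongly_connected N ET ->
  (forall i, (i < N)%nat -> theta i > 0 /\ delta i > 0) ->
  admissible N ER fT ->
  admissible N ET gR ->
  SURQT_solution N fT gR theta delta Rs Ts ->
  in_Omega N (Rs 0) (Ts 0) ->
  forall i, (i < N)%nat ->
    limsup_le (fun t => Rs t i) (fT i ones / (fT i ones + theta i)) /\
    liminf_ge (fun t => Ts t i)
      (theta i * delta i / ((fT i ones + theta i) * (fT i ones + delta i))).
Proof.
  intros _ _ Hp AR AT Sol Om i Hi.
  assert (Gf : forall i, (i < N)%nat -> good_fun N (fT i)) by (intros; eapply adm_good; eauto).
  assert (Gg : forall i, (i < N)%nat -> good_fun N (gR i)) by (intros; eapply adm_good; eauto).
  pose proof (invariance N theta delta fT gR Rs Ts Hp Gf Gg Sol Om) as Inv.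
  destruct (Hp i Hi) as [Hth Hde].
  set (F := fT i ones).
  assert (HF : 0 <= F) by (apply (gf_nonneg N); auto; intros; unfold ones; lra).
  destruct (Sol i Hi) as [_ [_ DD]].
  assert (Bnd : forall t, 0 <= t -> 0 <= fT i (Rs t) <= F /\ 0 <= gR i (Ts t)).
  { intros t Ht. split; [split|].
    - apply (gf_nonneg N); auto. intros k Hk. apply (Inv t Ht k Hk).
    - apply (gf_mono N); auto. intros k Hk. destruct (Inv t Ht k Hk) as [a [b c]]. unfold ones; lra.
    - apply (gf_nonneg N); auto. intros k Hk. apply (Inv t Ht k Hk). }
  assert (LS : limsup_le (fun t => Rs t i) (F / (F + theta i))).
  { eapply (limsup_from _ _ _ (F + theta i) 1); [lra|].
    apply (cmp_up (fun t => Rs t i)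
      (fun t => Ts t i * fT i (Rs t) - Rs t i * gR i (Ts t) - theta i * Rs t i)); [lra|lra| |].
    - intros t Ht. apply (DD t ltac:(lra)).
    - intros t Ht. destruct (Bnd t ltac:(lra)) as [[f0 f1] g0].
      destruct (Inv t ltac:(lra) i Hi) as [a [b c]].
      assert (Rs t i * gR i (Ts t) >= 0) by (apply Rle_ge, Rmult_le_pos; lra).
      assert (Ts t i * fT i (Rs t) <= (1 - Rs t i) * F).
      { apply Rle_trans with (Ts t i * F). apply Rmult_le_compat_l; lra.
        apply Rmult_le_compat_r; lra. }
      lra. }
  split; [exact LS|].
  intros eps He.
  set (e1 := eps * (F + delta i) / (2 * delta i)).
  assert (He1 : e1 > 0) by (unfold e1; apply Rdiv_lt_0_compat; nra).
  destruct (LS e1 He1) as [t0' T0'].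
  set (t0 := Rmax t0' 1).
  assert (Ht0 : t0 >= 1) by (unfold t0; pose proof (Rmax_r t0' 1); lra).
  assert (Ht0' : t0 >= t0') by (unfold t0; pose proof (Rmax_l t0' 1); lra).
  set (b := delta i * (theta i / (F + theta i) - e1)).
  assert (LI : liminf_ge (fun t => Ts t i) (b / (F + delta i))).
  { eapply (liminf_from _ _ _ (F + delta i) t0); [lra|].
    apply (cmp_low (fun t => Ts t i)
      (fun t => Rs t i * gR i (Ts t) - Ts t i * fT i (Rs t) + delta i * (1 - Rs t i - Ts t i)));
      [lra|lra| |].
    - intros t Ht. apply (DD t ltac:(lra)).
    - intros t Ht. destruct (Bnd t ltac:(lra)) as [[f0 f1] g0].
      destruct (Inv t ltac:(lra) i Hi) as [a [b' c]].
      assert (Rs t i * gR i (Ts t) >= 0) by (apply Rle_ge, Rmult_le_pos; lra).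
      assert (Ts t i * fT i (Rs t) <= Ts t i * F) by (apply Rmult_le_compat_l; lra).
      specialize (T0' t ltac:(lra)). simpl in T0'.
      assert (E : theta i / (F + theta i) = 1 - F / (F + theta i)) by (field; lra).
      assert (delta i * (theta i / (F + theta i) - e1) <= delta i * (1 - Rs t i)).
      { apply Rmult_le_compat_l; lra. }
      unfold b. lra. }
  destruct (LI (eps/2) ltac:(lra)) as [t1 T1].
  exists t1. intros t Ht. specialize (T1 t Ht). simpl in T1.
  assert (E : b / (F + delta i) - eps / 2 =
     theta i * delta i / ((F + theta i) * (F + delta i)) - eps).
  { unfold b, e1. field. lra. }
  fold F. lra.
Qed.
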